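(* Let $G$ be a graph and let $X,Y\subset V(G)$. Suppose that $X$ is $\alpha$-cut-linked in $G$ for some $\alpha>0$, and that there exists a collection $\mathcal{Q}$ of pairwise vertex-disjoint paths in $G$ between $X$ and $Y$ with $|\mathcal{Q}|=|Y|$. Then $Y$ is $\min\{1/2,\alpha/2\}$-cut-linked in $G$.
   Context: A set $X\subseteq V(G)$ is $\alpha$-cut-linked in $G$ if for every partition of $V(G)$ into $\{A,B\}$ we have $|E(A,B)|\geq\alpha\cdot\min\{|A\cap X|,|B\cap X|\}$, where $E(A,B)$ is the set of edges between $A$ and $B$. *)

(* Defs.v *)
From mathcomp Require Import all_boot all_order all_algebra.
Set Implicit Arguments. Unset Strict Implicit. Unset Printing Implicit Defensive.
Import Order.TTheory GRing.Theory Num.Theory.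
Local Open Scope ring_scope.

Definition simple_graph (T : finType) (e : rel T) : Prop :=
  symmetric e /\ irreflexive e.

(* |E(A,B)| : number of edges with one end in A and the other in B
   (for disjoint A, B each such edge is counted exactly once as the
   ordered pair (a, b) with a in A, b in B). *)
Definition cut_size (T : finType) (e : rel T) (A B : {set T}) : nat :=
  #|[set p : T * T | [&& p.1 \in A, p.2 \in B & e p.1 p.2]]|.

Definition cut_linked (R : realFieldType) (T : finType) (e : rel T)
  (alpha : R) (X : {set T}) : Prop :=
  forall A : {set T},
    (alpha * (minn #|A :&: X| #|(~: A) :&: X|)%:R <= (cut_size e A (~: A))%:R)%R.

Definition is_path (T : finType) (e : rel T) (p : seq T) : Prop :=
  exists x q, p = x :: q /\ path e x q /\ uniq p.

Definition XY_path (T : finType) (e : rel T) (X Y : {set T}) (p : seq T) : Prop :=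
  is_path e p /\ (exists x q, p = x :: q /\ x \in X /\ last x q \in Y).

Definition disjoint_paths (T : finType) (Q : seq (seq T)) : Prop :=
  uniq Q /\ forall i j, (i < size Q)%N -> (j < size Q)%N -> i <> j ->
    [disjoint (nth [::] Q i) & (nth [::] Q j)].

(* Main.v *)
Require Import Defs.
From mathcomp Require Import all_boot all_order all_algebra.
From mathcomp Require Import zify ring lra.
Import Order.TTheory GRing.Theory Num.Theory.
Local Open Scope ring_scope.

Set Implicit Arguments.
Section Aux.
Variables (T : finType) (e : rel T).

Lemma cross_edge (A : {set T}) (x : T) (q : seq T) :
  path e x q -> has (fun v => (v \in A) != (x \in A)) q ->
  exists u v, [/\ u \in x :: q, v \in x :: q, e u v & (u \in A) != (v \in A)].
Proof.
elim: q x => [|y q IH] x //= /andP[exy pq] /orP[hy|hq].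
  exists x, y; split=> //; rewrite ?inE ?eqxx ?orbT //.
  by rewrite eq_sym.
have [Ey|Ny] := eqVneq (y \in A) (x \in A).
  have [|u [v [uin vin euv uv]]] := IH y pq; first by rewrite Ey.
  exists u, v; split=> //; rewrite inE ?uin ?vin orbT //.
by exists x, y; split=> //; rewrite ?inE ?eqxx ?orbT // eq_sym.
Qed.

Lemma uniq_count_le (s : seq T) (S Z : {set T}) :
  uniq s -> {subset s <= Z} -> (count (mem S) s <= #|S :&: Z|)%N.
Proof.
move=> us sZ; rewrite -size_filter cardE; apply: uniq_leq_size.
  exact: filter_uniq.
move=> x; rewrite mem_filter mem_enum => /andP[xS xs]; rewrite inE.
by apply/andP; split; [exact: xS | exact: sZ].
Qed.

Lemma share_eq (Q : seq (seq T)) p p' v :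
  disjoint_paths Q -> p \in Q -> p' \in Q -> v \in p -> v \in p' -> p = p'.
Proof.
move=> [uQ dQ] pQ p'Q vp vp'.
have ip := index_mem p Q; have ip' := index_mem p' Q.
rewrite pQ in ip; rewrite p'Q in ip'.
have [Eij|Nij] := eqVneq (index p Q) (index p' Q).
  by rewrite -(nth_index [::] pQ) -(nth_index [::] p'Q) Eij.
have := dQ _ _ ip ip' (elimN eqP Nij).
rewrite !nth_index // => dis.
by rewrite (disjointFr dis vp) in vp'.
Qed.

Definition crossing (S : {set T}) (p : seq T) :=
  has (mem S) p && has (fun v => v \notin S) p.

Lemma count_cross_le (Q : seq (seq T)) (A : {set T}) :
  symmetric e ->
  (forall p, p \in Q -> is_path e p) -> disjoint_paths Q ->
  (count (crossing A) Q <= cut_size e A (~: A))%N.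
Proof.
move=> sym pathsQ dQ.
pose P (p : seq T) (uv : T * T) := [&& uv.1 \in p, uv.2 \in p, uv.1 \in A,
                            uv.2 \in ~: A & e uv.1 uv.2].
pose g (p : seq T) := [pick uv | P p uv].
have gP p : p \in Q -> crossing A p -> exists uv, g p = Some uv /\ P p uv.
  move=> pQ /andP[hA hN].
  have [x [q [Ep [pq _]]]] := pathsQ p pQ.
  have [u [v [up vp euv uv]]] : exists u v,
      [/\ u \in x :: q, v \in x :: q, e u v & (u \in A) != (v \in A)].
    apply: (cross_edge A x q pq).
    move: hA hN; rewrite Ep /= => /orP[xA|hA] /orP[xN|hN].
    - by rewrite xA in xN.
    - case/hasP: hN => w wq wN; apply/hasP; exists w => //.
      by rewrite xA (negbTE wN).
    - case/hasP: hA => w wq; rewrite inE => wA; apply/hasP; exists w => //.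
      by rewrite wA (negbTE xN).
    - case: (boolP (x \in A)) => xA.
      + case/hasP: hN => w wq wN; apply/hasP; exists w => //.
        by rewrite (negbTE wN).
      + case/hasP: hA => w wq; rewrite inE => wA; apply/hasP; exists w => //.
        by rewrite wA.
  rewrite /g; case: pickP => [w Hw|none]; first by exists w.
  exfalso.
  have Pp : P p (u, v) || P p (v, u).
    rewrite /P /= Ep up vp euv (sym v u) euv !inE /=.
    by move: uv; case: (u \in A); case: (v \in A).
  by case/orP: Pp => H; [move: (none (u, v)) | move: (none (v, u))];
    rewrite /= H.
rewrite -size_filter.
pose C := [set uv : T * T | [&& uv.1 \in A, uv.2 \in ~: A & e uv.1 uv.2]].
rewrite /cut_size -/C.
have -> : (#|C| = size (map Some (enum C)))%N by rewrite size_map cardE.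
rewrite -(size_map g).
apply: uniq_leq_size.
  rewrite map_inj_in_uniq; first by apply: filter_uniq; case: dQ.
  move=> p p'; rewrite !mem_filter => /andP[cp pQ] /andP[cp' p'Q] E.
  have [uv [gp Puv]] := gP p pQ cp.
  have [uv' [gp' Puv']] := gP p' p'Q cp'.
  rewrite gp gp' in E; case: E => E; subst uv'.
  case/and5P: Puv => u1 _ _ _ _; case/and5P: Puv' => u1' _ _ _ _.
  exact: (@share_eq Q p p' uv.1 dQ pQ p'Q u1 u1').
move=> o /mapP[p]; rewrite mem_filter => /andP[cp pQ] ->.
have [uv [-> Puv]] := gP p pQ cp.
apply/mapP; exists uv => //; rewrite mem_enum inE.
by case/and5P: Puv => _ _ -> -> ->.
Qed.

Lemma count_side (Q : seq (seq T)) (X Y S : {set T}) (x0 : T) :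
  (forall p, p \in Q -> XY_path e X Y p) -> disjoint_paths Q ->
  size Q = #|Y| ->
  (#|S :&: Y| <= #|S :&: X| + count (crossing S) Q)%N.
Proof.
move=> XYQ dQ sQ.
pose hd p := head x0 p; pose lst p := last x0 p.
have hdP p : p \in Q -> hd p \in p /\ hd p \in X.
  move=> pQ; have [_ [x [q [Ep [xX _]]]]] := XYQ p pQ.
  by rewrite /hd Ep /= inE eqxx.
have lstP p : p \in Q -> lst p \in p /\ lst p \in Y.
  move=> pQ; have [_ [x [q [Ep [_ lY]]]]] := XYQ p pQ.
  by rewrite /lst Ep /= mem_last.
have uQ : uniq Q by case: dQ.
have uh : uniq (map hd Q).
  rewrite map_inj_in_uniq // => p p' pQ p'Q E.
  apply: (@share_eq Q p p' (hd p) dQ pQ p'Q (hdP p pQ).1); rewrite E; exact: (hdP p' p'Q).1.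
have ul : uniq (map lst Q).
  rewrite map_inj_in_uniq // => p p' pQ p'Q E.
  apply: (@share_eq Q p p' (lst p) dQ pQ p'Q (lstP p pQ).1); rewrite E; exact: (lstP p' p'Q).1.
have subh : {subset map hd Q <= X}.
  by move=> v /mapP[p pQ ->]; exact: (hdP p pQ).2.
have subl : {subset map lst Q <= Y}.
  by move=> v /mapP[p pQ ->]; exact: (lstP p pQ).2.
have h1 := @uniq_count_le (map lst Q) S Y ul subl.
have h2 := @uniq_count_le (map lst Q) (~: S) Y ul subl.
have h3 := count_predC (mem S) (map lst Q).
have h4 : count (mem (~: S)) (map lst Q) = count (predC (mem S)) (map lst Q).
  by apply: eq_count => v; rewrite /= inE.
have h5 := cardsID S Y.
rewrite setIC (setIC (~: S)) in h1 h2 *; rewrite setDE in h5.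
have h6 := @uniq_count_le (map hd Q) S X uh subh.
have h7 : (count (mem S) (map lst Q) <=
           count (mem S) (map hd Q) + count (crossing S) Q)%N.
  rewrite !count_map -count_predUI.
  apply: leq_trans (leq_addr _ _); apply: sub_count => p /=.
  rewrite /hd /lst /crossing; case: p => [|x q] /= lS; first by rewrite lS.
  case: (boolP (x \in S)) => xS //=.
  apply/andP; split => //.
  move: (mem_last x q); rewrite inE => /orP[/eqP E|lq].
    by rewrite -E lS in xS.
  by apply/hasP; exists (last x q).
rewrite size_map sQ in h3.
lia.
Qed.

End Aux.
Unset Implicit Arguments.

Theorem lemma11 (R : realFieldType) (T : finType) (e : rel T)
  (X Y : {set T}) (alpha : R) (Q : seq (seq T)) :
  simple_graph e ->
  0 < alpha ->
  cut_linked e alpha X ->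
  (forall p, p \in Q -> XY_path e X Y p) ->
  disjoint_paths Q ->
  size Q = #|Y| ->
  cut_linked e (Num.min (1 / 2) (alpha / 2)) Y.
Proof.
move=> [sym _] apos cX XYQ dQ sQ A.
case: Q XYQ dQ sQ => [|p0 Q'] XYQ dQ sQ.
  have Y0 : #|A :&: Y| = 0%N.
    apply/eqP; rewrite -leqn0; apply: leq_trans (subset_leq_card (subsetIr A Y)) _.
    by rewrite -sQ.
  by rewrite Y0 min0n mulr0 ler0n.
set Q := p0 :: Q' in XYQ dQ sQ *.
have [_ [x0 _]] := XYQ p0 (mem_head _ _).
have pathsQ p : p \in Q -> is_path e p by move/XYQ => [].
have hc := count_cross_le A sym pathsQ dQ.
have h1 := count_side A x0 XYQ dQ sQ.
have h2 := count_side (~: A) x0 XYQ dQ sQ.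
have Ec : count (crossing (~: A)) Q = count (crossing A) Q.
  apply: eq_count => p; rewrite /crossing andbC.
  by congr (_ && _); apply: eq_has => v; rewrite /= inE ?negbK.
rewrite Ec in h2.
set c := count (crossing A) Q in hc h1 h2.
set cut := cut_size e A (~: A) in hc *.
set m := minn #|A :&: Y| #|~: A :&: Y|.
set M := minn #|A :&: X| #|~: A :&: X|.
have hmM : (m <= M + c)%N by rewrite /m /M; lia.
have cXA := cX A; rewrite -/M -/cut in cXA.
have rmM : (m%:R <= M%:R + c%:R :> R) by rewrite -natrD ler_nat.
have rc : (c%:R <= cut%:R :> R) by rewrite ler_nat.
have M0 : (0 <= M%:R :> R) by [].
have c0 : (0 <= c%:R :> R) by [].
have m0 : (0 <= m%:R :> R) by [].
have [a1|a1] := lerP alpha 1.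
  have hmin : Num.min (1 / 2) (alpha / 2) <= alpha / 2 by rewrite ge_min lexx orbT.
  apply: le_trans (ler_wpM2r m0 hmin) _.
  nra.
have hmin : Num.min (1 / 2) (alpha / 2) <= 1 / 2 by rewrite ge_min lexx.
apply: le_trans (ler_wpM2r m0 hmin) _.
nra.
Qed.
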